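(* Let $G=(g_1,\dots,g_k)\in\mathbb{N}_0^k$ be telescopic with $g_1>0$, $c(G)=(c_2,\dots,c_k)$ and $d=\gcd(G)$, and put $z_i=g_i/C_{i,k}$ for $1\le i\le k$ (these are non-negative integers, multiples of $d$, with $z_1=d$). Then $G$ is minimal if and only if $c_j>1$ for all $2\le j\le k$ and $z_j\nmid z_iC_{i,j}$ for all $1\le i<j\le k$.
   Context: For $G\in\mathbb{N}_0^k$, $\langle G\rangle$ is the set of $\mathbb{N}_0$-linear combinations of its entries; $G$ is minimal if no proper subsequence generates $\langle G\rangle$. $G_i=(g_1,\dots,g_i)$, $d_i=\gcd(G_i)$, $c_j=d_{j-1}/d_j$ for $2\le j\le k$. $G$ is telescopic if $c_jg_j\in\langle G_{j-1}\rangle$ for $2\le j\le k$. For $0\le m,n$, $C_{m,n}=\prod_{j=m+1}^n c_j$, an empty product (when $n\le m$) being $1$. Here $a\mid b$ means $b=at$ for some integer $t$. *)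

(* Defs.v *)
(* Sequences G = (g_1,...,g_k) are `seq nat`, k = size G,
   g_i = nth 0 G i.-1 (1-based indices as in the paper). *)
From mathcomp Require Import all_boot.
Set Implicit Arguments. Unset Strict Implicit. Unset Printing Implicit Defensive.

Definition gi (G : seq nat) (i : nat) : nat := nth 0 G i.-1.

Definition gen (G : seq nat) (n : nat) : Prop :=
  exists a : seq nat, size a = size G /\
    n = \sum_(i < size G) nth 0 a i * nth 0 G i.

Definition minimal (G : seq nat) : Prop :=
  ~ exists s : seq nat, subseq s G /\ size s < size G /\
      (forall n, gen s n <-> gen G n).

Definition dd (G : seq nat) (i : nat) : nat := \big[gcdn/0]_(x <- take i G) x.

Definition cc (G : seq nat) (j : nat) : nat := dd G j.-1 %/ dd G j.

Definition telescopic (G : seq nat) : Prop :=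
  forall j, 2 <= j <= size G -> gen (take j.-1 G) (cc G j * gi G j).

Definition CC (G : seq nat) (m n : nat) : nat := \prod_(m.+1 <= j < n.+1) cc G j.

Definition zz (G : seq nat) (i : nat) : nat := gi G i %/ CC G i (size G).

(* Main.v *)
Require Import Defs.
From mathcomp Require Import all_boot.
From mathcomp Require Import zify.

Definition Fs (s : seq nat) (f : nat -> nat) : nat :=
  \sum_(0 <= i < size s) f i * nth 0 s i.

Lemma genE0 s n : gen s n <-> exists f, n = Fs s f.
Proof.
rewrite /gen /Fs; split.
- move=> [a [_ ->]]; exists (fun i => nth 0 a i); by rewrite big_mkord.
- move=> [f ->]; exists (mkseq f (size s)); rewrite size_mkseq; split=> //.
  rewrite big_mkord; apply: eq_bigr => i _.
  by rewrite nth_mkseq.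
Qed.

Lemma Fs_cons x s f : Fs (x :: s) f = f 0 * x + Fs s (fun i => f i.+1).
Proof. by rewrite /Fs /= big_nat_recl. Qed.

Lemma sum_single a b j x : a <= j < b ->
  \sum_(a <= t < b) (if t == j then x else 0) = x.
Proof.
move=> /andP[haj hjb].
rewrite (big_cat_nat haj (ltnW hjb)) /= [X in _ + X]big_ltn // eqxx.
rewrite big_nat_cond big1 ?add0n; last first.
  by move=> t /andP[/andP[_ ht] _]; rewrite (ltn_eqF ht).
rewrite big_nat_cond big1 ?addn0 //.
by move=> t /andP[/andP[ht _] _]; rewrite (gtn_eqF ht).
Qed.

Lemma leq_term a b j (F : nat -> nat) : a <= j < b -> F j <= \sum_(a <= t < b) F t.
Proof.
move=> /andP[haj hjb].
rewrite (big_cat_nat haj (ltnW hjb)) /= [X in _ + X]big_ltn //.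
by rewrite addnCA leq_addr.
Qed.

Lemma gen_mask m s n : size m = size s ->
  (gen (mask m s) n <-> exists f, n = Fs s f /\
     forall i, i < size s -> nth false m i = false -> f i = 0).
Proof.
elim: s m n => [|x s IH] [|b m] n //=.
- move=> _; rewrite genE0; split.
  + by move=> [f ->]; exists f.
  + by move=> [f [-> _]]; exists f.
- move=> [hs]; case: b.
  + rewrite genE0; split.
    * move=> [f ->]; rewrite Fs_cons.
      have /(IH m _ hs) [f' [e hf']] : gen (mask m s) (Fs (mask m s) (fun i => f i.+1)).
        by apply/genE0; eexists.
      exists (fun i => if i is i'.+1 then f' i' else f 0); split.
        by rewrite Fs_cons -e.
      by case=> // i /= hi; apply: hf'.
    * move=> [f [-> hf]]; rewrite Fs_cons.
      have /(IH m _ hs) /genE0 [f2 e2] : exists f', Fs s (fun i => f i.+1) = Fs s f' /\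
          forall i, i < size s -> nth false m i = false -> f' i = 0.
        by exists (fun i => f i.+1); split=> // i hi; apply: (hf i.+1).
      exists (fun i => if i is i'.+1 then f2 i' else f 0).
      by rewrite Fs_cons e2.
  + split.
    * move=> /(IH m _ hs) [f' [e hf']].
      exists (fun i => if i is i'.+1 then f' i' else 0); split.
        by rewrite Fs_cons mul0n add0n -e.
      by case=> // i /= hi; apply: hf'.
    * move=> [f [-> hf]]; rewrite Fs_cons (hf 0) // mul0n add0n.
      apply/(IH m _ hs); exists (fun i => f i.+1); split=> // i hi.
      by apply: (hf i.+1).
Qed.

Lemma gen_take G t n : t <= size G -> gen (take t G) n ->
  exists h, n = \sum_(1 <= i < t.+1) h i * gi G i.
Proof.
move=> ht /genE0 [f ->]; exists (fun i => f i.-1).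
rewrite /Fs size_take_min (minn_idPl ht) big_add1 /=.
apply: eq_big_nat => i /andP[_ hi]; rewrite /gi /= nth_take //.
Qed.

Lemma ddS G n : dd G n.+1 = gcdn (dd G n) (nth 0 G n).
Proof.
rewrite /dd; case: (ltnP n (size G)) => h.
  by rewrite (take_nth 0 h) -cats1 big_cat big_seq1.
rewrite !take_oversize ?(leq_trans h) // nth_default // gcdn0 //.
Qed.

Lemma dd0 G : dd G 0 = 0.
Proof. by rewrite /dd take0 big_nil. Qed.

Lemma dd_dvd_g G i : 1 <= i -> dd G i %| gi G i.
Proof. by case: i => // i _; rewrite ddS dvdn_gcdr. Qed.

Lemma dd_mono G i j : i <= j -> dd G j %| dd G i.
Proof.
move=> /subnK <-; elim: (j - i) => [|t IH] //=.
by rewrite addSn ddS (dvdn_trans (dvdn_gcdl _ _) IH).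
Qed.

Lemma dd_pos G i : 0 < gi G 1 -> 1 <= i -> 0 < dd G i.
Proof.
move=> g1 hi; apply: (dvdn_gt0 _ (dd_mono G _ _ hi)).
by rewrite ddS dd0 gcd0n.
Qed.

Lemma cc_mul G j : cc G j * dd G j = dd G j.-1.
Proof. by rewrite /cc divnK //; case: j => // j; apply: dd_mono. Qed.

Lemma CC_mul G m n : m <= n -> CC G m n * dd G n = dd G m.
Proof.
move=> /subnK <-; elim: (n - m) => [|t IH] /=.
  by rewrite /CC big_geq // mul1n.
rewrite /CC addSn big_nat_recr /=; last by rewrite ltnS leq_addl.
by rewrite -mulnA cc_mul /= IH.
Qed.

Lemma CC_cat G i j k : i <= j -> j <= k -> CC G i k = CC G i j * CC G j k.
Proof. by move=> hij hjk; rewrite /CC (big_cat_nat (n:=j.+1)). Qed.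

Lemma CC_pos G m n : 0 < gi G 1 -> 1 <= m -> m <= n -> 0 < CC G m n.
Proof.
move=> g1 hm hmn; have := dd_pos G m g1 hm; rewrite -(CC_mul G _ _ hmn).
by rewrite muln_gt0 => /andP[].
Qed.

Lemma zzK G i : 0 < gi G 1 -> 1 <= i <= size G -> zz G i * CC G i (size G) = gi G i.
Proof.
move=> g1 /andP[hi hik]; rewrite /zz divnK //.
apply: dvdn_trans (dd_dvd_g G i hi).
by rewrite -(CC_mul G _ _ hik) dvdn_mulr.
Qed.

Lemma zz_dvd G i j : 0 < gi G 1 -> 1 <= i -> i < j -> j <= size G ->
  (zz G j %| zz G i * CC G i j) = (gi G j %| gi G i).
Proof.
move=> g1 hi hij hjk.
have hj : 1 <= j by apply: leq_trans hij.
rewrite -(dvdn_pmul2r (CC_pos G j (size G) g1 hj hjk)) -mulnA -(CC_cat _ _ _ _ (ltnW hij) hjk).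
by rewrite !zzK ?hi ?hj ?hjk ?(leq_trans (ltnW hij) hjk).
Qed.

Lemma cc_pos G j : 0 < gi G 1 -> 2 <= j -> 0 < cc G j.
Proof.
move=> g1; case: j => // j hj.
have := dd_pos G j g1 hj; rewrite -[j]/(j.+1.-1) -cc_mul.
by rewrite muln_gt0 => /andP[].
Qed.

Lemma lowcase G m : 0 < gi G 1 ->
  (forall j, 2 <= j <= size G -> 1 < cc G j) -> 1 <= m <= size G ->
  dd G m.-1 %| gi G m -> False.
Proof.
move=> g1 hc; case: m => // [[|m]] /andP[_ hmk] /=.
  by rewrite dd0 dvd0n => /eqP e; rewrite e in g1.
move=> hd; have := hc m.+2; rewrite hmk /= => /(_ isT).
rewrite /cc /= (ddS G m.+1).
have -> : gcdn (dd G m.+1) (nth 0 G m.+1) = dd G m.+1 by apply/gcdn_idPl.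
by rewrite divnn (dd_pos G m.+1 g1).
Qed.

Lemma main_back G : telescopic G -> 0 < gi G 1 ->
  (forall j, 2 <= j <= size G -> 1 < cc G j) ->
  (forall i j, 1 <= i -> i < j -> j <= size G -> ~ (gi G j %| gi G i)) ->
  forall m, 1 <= m <= size G -> forall l, l <= size G -> forall f, f m = 0 ->
  gi G m = \sum_(1 <= i < l.+1) f i * gi G i -> False.
Proof.
move=> tel g1 hc hz m /andP[hm1 hmk].
elim=> [|l IH] hl f fm E.
  apply: (lowcase G m g1 hc); first by rewrite hm1.
  by rewrite E big_geq.
have Ll : l < size G := hl.
case: (ltngtP l.+1 m) => hlm.
- apply: (lowcase G m g1 hc); first by rewrite hm1.
  rewrite E big_nat_cond; apply: dvdn_sum => i /andP[/andP[hi1 hi2] _].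
  apply: dvdn_mull; apply: dvdn_trans _ (dd_dvd_g G i hi1).
  apply: dd_mono; lia.
-
  have hml : m <= l by [].
  have L2 : 2 <= l.+1 by rewrite ltnS (leq_trans hm1 hml).
  suff H : forall a f, f l.+1 = a -> f m = 0 ->
      gi G m = \sum_(1 <= i < l.+2) f i * gi G i -> False by exact: (H _ f erefl fm E).
  elim/ltn_ind => a IHa {}f fa {}fm {}E.
  rewrite big_nat_recr //= fa in E.
  case: (posnP a) => [a0|apos].
    by apply: (IH (ltnW Ll) f fm); rewrite E a0 mul0n addn0.
  have dS : dd G l %| \sum_(1 <= i < l.+1) f i * gi G i.
    rewrite big_nat_cond; apply: dvdn_sum => i /andP[/andP[hi1 hi2] _]; apply: dvdn_mull.
    have hil : i <= l by rewrite -ltnS.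
    exact: dvdn_trans (dd_mono G _ _ hil) (dd_dvd_g G i hi1).
  have dm : dd G l %| gi G m := dvdn_trans (dd_mono G _ _ hml) (dd_dvd_g G m hm1).
  have da : dd G l %| a * gi G l.+1 by rewrite -(dvdn_addr _ dS) -E.
  have dca : cc G l.+1 %| a.
    have dL := dd_pos G l.+1 g1 isT.
    rewrite -(dvdn_pmul2r dL) cc_mul /=.
    have -> : a * dd G l.+1 = gcdn (a * gi G l.+1) (a * dd G l).
      by rewrite -muln_gcdr ddS gcdnC.
    by rewrite dvdn_gcd da dvdn_mull.
  have cpos : 1 < cc G l.+1 by apply: hc; rewrite L2.
  have cla : cc G l.+1 <= a := dvdn_leq apos dca.
  have := tel l.+1; rewrite L2 Ll => /(_ isT) /=.
  move=> /(gen_take G l _ (ltnW Ll)) [h eh].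
  case: (posnP (h m)) => [hm0|hmpos].
  + pose f' i := if i == l.+1 then a - cc G l.+1 else f i + h i.
    apply: (IHa (a - cc G l.+1) _ f').
    * by rewrite ltn_subrL apos (ltnW cpos).
    * by rewrite /f' eqxx.
    * by rewrite /f' (ltn_eqF (leq_ltn_trans hml (ltnSn _))) fm hm0.
    rewrite big_nat_recr //= /f' eqxx.
    rewrite (eq_big_nat _ _ (F2 := fun i => f i * gi G i + h i * gi G i)); last first.
      by move=> i /andP[_ hi]; rewrite (ltn_eqF hi) mulnDl.
    rewrite big_split /= -eh E -addnA; congr (_ + _).
    by rewrite -mulnDl addnC subnK.
  + have h1 : h m * gi G m <= cc G l.+1 * gi G l.+1.
      rewrite eh; apply: (leq_term 1 l.+1 m (fun i => h i * gi G i)).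
      by rewrite hm1 ltnS.
    have h2 : gi G m <= h m * gi G m by apply: leq_pmull.
    have h3 : cc G l.+1 * gi G l.+1 <= a * gi G l.+1 by apply: leq_mul.
    have e : gi G m = cc G l.+1 * gi G l.+1.
      apply/eqP; rewrite eqn_leq (leq_trans h2 h1) /=.
      by rewrite (leq_trans h3) // E leq_addl.
    apply: (hz m l.+1 hm1 hlm Ll); rewrite e; exact: dvdn_mull.
- subst m; apply: (IH (ltnW Ll) f fm).
  by rewrite E big_nat_recr //= fm mul0n addn0.
Qed.

Lemma Fs_shift G f : \sum_(1 <= i < (size G).+1) f i * gi G i = Fs G (fun i => f i.+1).
Proof. by rewrite big_add1. Qed.

Lemma notmin G : (exists p, 1 <= p <= size G /\ exists f, f p = 0 /\
   gi G p = \sum_(1 <= i < (size G).+1) f i * gi G i) -> ~ minimal G.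
Proof.
move=> [p [/andP[hp1 hpk] [f [fp E]]]]; apply.
pose m := mkseq (fun i => i.+1 != p) (size G).
have szm : size m = size G by rewrite size_mkseq.
have qp : p.-1.+1 = p by rewrite prednK.
exists (mask m G); split; first exact: mask_subseq.
split.
  rewrite size_mask //.
  have : has (predC id) m.
    apply/hasP; exists false => //.
    apply/mapP; exists p.-1; first by rewrite mem_iota add0n; lia.
    by rewrite qp eqxx.
  rewrite has_count -szm => hc; have := count_predC id m; lia.
move=> n; rewrite gen_mask //; split.
  by move=> [f0 [-> _]]; apply/genE0; eexists.
move=> /genE0 [f0 ->].
set q := p.-1.
have Eh : nth 0 G q = Fs G (fun i => f i.+1) by rewrite -Fs_shift -E.
pose f1 i := (if i == q then 0 else f0 i) + f0 q * f i.+1.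
exists f1; split; last first.
  move=> i hi; rewrite nth_mkseq // => /negbFE /eqP hip.
  have -> : i = q by rewrite /q -hip.
  by rewrite /f1 eqxx qp fp muln0.
rewrite /Fs.
under [X in _ = X]eq_bigr do rewrite /f1 mulnDl -mulnA.
rewrite big_split /= -big_distrr /= -[\sum_(0 <= i < size G) f i.+1 * nth 0 G i]/(Fs G _) -Eh.
rewrite (eq_bigr (fun i => (if i == q then 0 else f0 i) * nth 0 G i +
                          (if i == q then f0 q * nth 0 G q else 0))); last first.
  by move=> i _; case: eqP => [->|]; rewrite ?mul0n ?add0n ?addn0.
rewrite big_split /= sum_single //; apply/andP; split => //; rewrite /q; lia.
Qed.

Lemma min_conds G : telescopic G -> 0 < gi G 1 -> minimal G ->
  (forall j, 2 <= j <= size G -> 1 < cc G j) /\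
  (forall i j, 1 <= i -> i < j -> j <= size G -> ~ (gi G j %| gi G i)).
Proof.
move=> tel g1 hmin; split.
- move=> j /andP[hj2 hjk]; rewrite ltnNge; apply/negP => hc1.
  have c1 : cc G j = 1 by have := cc_pos G j g1 hj2; lia.
  have := tel j; rewrite hj2 hjk c1 mul1n => /(_ isT) /(gen_take G j.-1 _ (leq_trans (leq_pred _) hjk)).
  move=> [h eh]; move: hmin; apply: notmin.
  exists j; split; first by rewrite hjk; lia.
  exists (fun i => if i < j then h i else 0); split; first by rewrite ltnn.
  have hj1 : 1 <= j by lia.
  rewrite (big_cat_nat (n := j)) //=; last by lia.
  rewrite [X in _ = _ + X]big_nat_cond [X in _ = _ + X]big1 ?addn0; last first.
    by move=> i /andP[/andP[hi _] _]; rewrite ltnNge hi.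
  rewrite eh (prednK hj1); apply: eq_big_nat => i /andP[_ ->] //.
- move=> i j hi hij hjk hd; move: hmin; apply: notmin.
  exists i; split; first by rewrite hi /=; lia.
  exists (fun t => if t == j then gi G i %/ gi G j else 0); split.
    by rewrite (ltn_eqF hij).
  rewrite (eq_bigr (fun t => if t == j then gi G i %/ gi G j * gi G j else 0)).
    by rewrite sum_single ?divnK //; apply/andP; split; lia.
  by move=> t _; case: eqP => [->|]; rewrite ?mul0n.
Qed.

Lemma conds_min G : telescopic G -> 0 < gi G 1 ->
  (forall j, 2 <= j <= size G -> 1 < cc G j) ->
  (forall i j, 1 <= i -> i < j -> j <= size G -> ~ (gi G j %| gi G i)) ->
  minimal G.
Proof.
move=> tel g1 hc hz [s [/subseqP [m hm ->] [hsz heq]]].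
rewrite size_mask // in hsz.
have : has (predC id) m.
 rewrite has_count; have := count_predC id m; move=> hh.
  by move: hsz; rewrite -hm -hh -{1}[count id m]addn0 ltn_add2l.
move=> /(has_nthP false) [q hq /= hnq].
rewrite hm in hq.
have : gen G (nth 0 G q).
  apply/genE0; exists (fun t => (t == q) : nat); rewrite /Fs.
  rewrite (eq_bigr (fun t => if t == q then nth 0 G q else 0)).
    by rewrite sum_single //; apply/andP; split; lia.
  by move=> t _; case: eqP => [->|]; rewrite ?mul1n ?mul0n.
move=> /heq /gen_mask -/(_ hm) [f0 [e hf0]].
apply: (main_back G tel g1 hc hz q.+1 _ (size G) (leqnn _) (fun i => f0 i.-1)).
- by apply/andP; split.
- by apply: hf0 => //; apply: negbTE.
- by rewrite Fs_shift /= -e.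
Qed.

Theorem mainTheorem6 (G : seq nat) :
  telescopic G -> 0 < gi G 1 ->
  (minimal G <->
   ((forall j, 2 <= j <= size G -> 1 < cc G j) /\
    (forall i j, 1 <= i -> i < j -> j <= size G ->
       ~ (zz G j %| zz G i * CC G i j)))).
Proof.
move=> tel g1; split.
- move=> hmin; have [hc hz] := min_conds G tel g1 hmin; split=> // i j hi hij hjk.
  by rewrite (zz_dvd G i j g1 hi hij hjk); exact: hz.
- move=> [hc hz]; apply: conds_min => // i j hi hij hjk.
  by rewrite -(zz_dvd G i j g1 hi hij hjk); exact: hz.
Qed.
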